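(* Suppose $\tau\in(1,2)$ is the smallest $x\ge1$ such that $\omega'(x)=0$. Then $\tau>1.732$.
   Context: For $x\ge1$ let $\psi_1(x)=\frac32\int_0^{\pi/2}(1-x^{-2}\sin^2u)^{3/2}\,du$ and $\psi_2(x)=\frac32(1-x^{-2})^2\int_0^{\pi/2}\frac{\sin^4v}{\sqrt{1-(1-x^{-2})\sin^2v}}\,dv$, and $\omega(x)=\psi_2'(x)\psi_1(x)-\psi_2(x)\psi_1'(x)$. *)

(* Defs.v *)
From Stdlib Require Import Reals.
From Coquelicot Require Import Coquelicot.
Open Scope R_scope.

(* a^(3/2) for a >= 0, written as a * sqrt a *)
Definition pow32 (a : R) : R := a * sqrt a.

Definition psi1 (x : R) : R :=
  3 / 2 * RInt (fun u => pow32 (1 - / x ^ 2 * sin u ^ 2)) 0 (PI / 2).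

Definition psi2 (x : R) : R :=
  3 / 2 * (1 - / x ^ 2) ^ 2 *
  RInt (fun v => sin v ^ 4 / sqrt (1 - (1 - / x ^ 2) * sin v ^ 2)) 0 (PI / 2).

Definition omega (x : R) : R :=
  Derive psi2 x * psi1 x - psi2 x * Derive psi1 x.

(* Main.v *)
Require Import Defs.
From Stdlib Require Import Reals Lra Psatz.
From Coquelicot Require Import Coquelicot.
Open Scope R_scope.

Lemma sin2_bounds u : 0 <= sin u ^ 2 <= 1.
Proof. pose proof (sin2_cos2 u) as H; unfold Rsqr in H. split; nra. Qed.

Lemma wpos p u : p < 1 -> 0 < 1 - p * sin u ^ 2.
Proof. intros Hp. pose proof (sin2_bounds u). destruct (Rle_dec 0 p); nra. Qed.

Definition Ef p := RInt (fun u => sqrt (1 - p * sin u ^ 2)) 0 (PI/2).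
Definition Kf p := RInt (fun u => / sqrt (1 - p * sin u ^ 2)) 0 (PI/2).
Definition Af p := RInt (fun u => pow32 (1 - p * sin u ^ 2)) 0 (PI/2).
Definition Cf p := RInt (fun u => / ((1 - p * sin u ^ 2) * sqrt (1 - p * sin u ^ 2))) 0 (PI/2).

Lemma cont_of_der (f : R -> R) x : ex_derive f x -> continuous f x.
Proof. intros H. exact (@ex_derive_continuous R_AbsRing R_NormedModule f x H). Qed.

Lemma exRd (f : R -> R) a b : (forall z, ex_derive f z) -> ex_RInt f a b.
Proof. intros H. apply (@ex_RInt_continuous R_CompleteNormedModule). intros z _. apply cont_of_der, H. Qed.

Ltac exr p := apply exRd; intros ?;
  auto_derive; repeat split; try apply Rgt_not_eq; 
  try apply wpos; try apply sqrt_lt_R0; try apply Rmult_lt_0_compat; try apply wpos; try apply sqrt_lt_R0; try apply wpos; lra.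

Lemma exE p : p < 1 -> ex_RInt (fun u => sqrt (1 - p * sin u ^ 2)) 0 (PI/2).
Proof. intros; exr p. Qed.
Lemma exK p : p < 1 -> ex_RInt (fun u => / sqrt (1 - p * sin u ^ 2)) 0 (PI/2).
Proof. intros; exr p. Qed.
Lemma exA p : p < 1 -> ex_RInt (fun u => pow32 (1 - p * sin u ^ 2)) 0 (PI/2).
Proof. intros; unfold pow32; exr p. Qed.
Lemma exC p : p < 1 -> ex_RInt (fun u => / ((1 - p * sin u ^ 2) * sqrt (1 - p * sin u ^ 2))) 0 (PI/2).
Proof. intros; exr p. Qed.

Ltac req := match goal with |- ?a = ?b => change (@eq R a b) end.

Lemma powSS x n : x ^ (S (S n)) = x ^ n * x ^ 2. Proof. simpl; ring. Qed.
Ltac red2 r Hr :=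
  repeat match goal with
  | |- context [r ^ 2] => rewrite Hr
  | |- context [r ^ S (S (S ?n))] => rewrite (powSS r (S n))
  end.
Ltac alg p u :=
  match goal with |- ?a = ?b => change (@eq R a b) end;
  try replace (1 + - (p*(sin u*(sin u*1)))) with (1 - p*sin u^2) by ring;
  unfold pow32;
  let Hw := fresh in let Hr := fresh in let Hr2 := fresh in let Hc := fresh in
  assert (Hw := wpos p u ltac:(lra));
  assert (Hr := sqrt_lt_R0 _ Hw);
  assert (Hr2 := pow2_sqrt _ (Rlt_le _ _ Hw));
  assert (Hc : cos u ^ 2 = 1 - sin u ^ 2) by (pose proof (sin2_cos2 u) as HH; unfold Rsqr in HH; nra);
  set (r := sqrt (1 - p * sin u ^ 2)) in *;
  set (s := sin u) in *; set (c := cos u) in *; clearbody r s c;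
  field_simplify_eq; [red2 r Hr2; red2 c Hc; ring | lra..].

Lemma loc_of (P : R -> Prop) x : (exists eps, 0 < eps /\ forall y, Rabs (y - x) < eps -> P y) -> locally x P.
Proof. intros [e [He H]]. exists (mkposreal e He). intros y Hy. apply H. exact Hy. Qed.

Lemma loc_int a b x : a < x < b -> locally x (fun y => a < y < b).
Proof. intros H. apply loc_of. exists (Rmin (x - a) (b - x)). split.
 apply Rmin_pos; lra. intros y Hy. pose proof (Rmin_l (x-a) (b-x)). pose proof (Rmin_r (x-a) (b-x)).
 apply Rabs_def2 in Hy. lra. Qed.

Lemma ibp (g dg : R -> R) a b : (forall u, is_derive g u (dg u)) -> (forall u, ex_derive dg u) ->
  RInt dg a b = g b - g a.
Proof. intros H1 H2. apply is_RInt_unique.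
 apply (@is_RInt_derive R_CompleteNormedModule). intros; apply H1. intros; apply cont_of_der, H2. Qed.

Lemma RInt_lin3 (f1 f2 f3 : R -> R) a1 a2 a3 a b : ex_RInt f1 a b -> ex_RInt f2 a b -> ex_RInt f3 a b ->
  RInt (fun u => a1 * f1 u + a2 * f2 u + a3 * f3 u) a b = a1 * RInt f1 a b + a2 * RInt f2 a b + a3 * RInt f3 a b.
Proof. intros H1 H2 H3.
 assert (E1 := RInt_scal (V:=R_CompleteNormedModule) f1 a b a1 H1).
 assert (E2 := RInt_scal (V:=R_CompleteNormedModule) f2 a b a2 H2).
 assert (E3 := RInt_scal (V:=R_CompleteNormedModule) f3 a b a3 H3).
 assert (X1 := ex_RInt_scal (V:=R_CompleteNormedModule) f1 a b a1 H1).
 assert (X2 := ex_RInt_scal (V:=R_CompleteNormedModule) f2 a b a2 H2).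
 assert (X3 := ex_RInt_scal (V:=R_CompleteNormedModule) f3 a b a3 H3).
 assert (X12 := ex_RInt_plus (V:=R_CompleteNormedModule) _ _ a b X1 X2).
 assert (E12 := RInt_plus (V:=R_CompleteNormedModule) _ _ a b X1 X2).
 assert (E123 := RInt_plus (V:=R_CompleteNormedModule) _ _ a b X12 X3).
 simpl in *. unfold plus, scal in *; simpl in *; unfold mult in *; simpl in *.
 rewrite E123, E12, E1, E2, E3. reflexivity.
Qed.
Ltac side1 p u :=
  try (replace (1 + - (p*(sin u*(sin u*1)))) with (1 - p*sin u^2) by ring);
  first [ exact I | apply wpos; lra | apply Rgt_not_eq; apply sqrt_lt_R0, wpos; lra
        | apply Rgt_not_eq; apply Rmult_lt_0_compat; [apply wpos | apply sqrt_lt_R0, wpos]; lra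
        | assumption | lra ].
Ltac sides p u := repeat split; side1 p u.

Lemma ibpA p : p < 1 -> p <> 0 -> 3 * Af p + 2*(p-2) * Ef p + (1-p) * Kf p = 0.
Proof. intros Hp Hp0.
 assert (H := ibp (fun u => sin u * cos u * sqrt(1 - p * sin u^2))
   (fun u => 3/p * pow32 (1 - p * sin u^2) + 2*(p-2)/p * sqrt(1 - p * sin u^2) + (1-p)/p * / sqrt (1 - p * sin u^2)) 0 (PI/2)).
 rewrite RInt_lin3 in H; [| apply exA; lra | apply exE; lra | apply exK; lra].
 rewrite cos_PI2, sin_0 in H. unfold Af, Ef, Kf.
 assert (H' : 3 / p * RInt (fun u : R => pow32 (1 - p * sin u ^ 2)) 0 (PI / 2) +
     2 * (p - 2) / p * RInt (fun u : R => sqrt (1 - p * sin u ^ 2)) 0 (PI / 2) +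
     (1 - p) / p * RInt (fun u : R => / sqrt (1 - p * sin u ^ 2)) 0 (PI / 2) = 0).
 { rewrite H. ring. intros u. auto_derive. sides p u. alg p u.
   intros u. unfold pow32. auto_derive. sides p u. }
 field_simplify in H'; [| exact Hp0]. unfold Rdiv in H'. 
 apply Rmult_integral in H'. destruct H' as [H'|H']; [ lra | ]. apply Rinv_neq_0_compat in Hp0. contradiction.
Qed.

Lemma ibpC p : p < 1 -> p <> 0 -> Ef p + (p-1) * Cf p = 0.
Proof. intros Hp Hp0.
 assert (H := ibp (fun u => sin u * cos u / sqrt(1 - p * sin u^2))
   (fun u => 1/p * sqrt(1 - p * sin u^2) + (p-1)/p * / ((1 - p * sin u ^ 2) * sqrt (1 - p * sin u ^ 2)) + 0 * 0) 0 (PI/2)).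
 rewrite RInt_lin3 in H; [| apply exE; lra | apply exC; lra | apply ex_RInt_const].
 rewrite cos_PI2, sin_0 in H. unfold Cf, Ef.
 assert (H' : 1 / p * RInt (fun u : R => sqrt (1 - p * sin u ^ 2)) 0 (PI / 2) +
     (p - 1) / p * RInt (fun u => / ((1 - p * sin u ^ 2) * sqrt (1 - p * sin u ^ 2))) 0 (PI / 2) = 0).
 { replace (1 / p * RInt (fun u : R => sqrt (1 - p * sin u ^ 2)) 0 (PI / 2) +
     (p - 1) / p * RInt (fun u => / ((1 - p * sin u ^ 2) * sqrt (1 - p * sin u ^ 2))) 0 (PI / 2))
   with (1 / p * RInt (fun u : R => sqrt (1 - p * sin u ^ 2)) 0 (PI / 2) +
     (p - 1) / p * RInt (fun u => / ((1 - p * sin u ^ 2) * sqrt (1 - p * sin u ^ 2))) 0 (PI / 2) + 0 * RInt (fun _ => 0) 0 (PI/2)) by ring.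
   rewrite H. unfold Rdiv; ring. intros u. auto_derive. sides p u. alg p u.
   intros u. auto_derive. sides p u. }
 field_simplify in H'; [| exact Hp0]. unfold Rdiv in H'. 
 apply Rmult_integral in H'. destruct H' as [H'|H']; [ lra | ]. apply Rinv_neq_0_compat in Hp0. contradiction.
Qed.

Lemma param_der (f df : R -> R -> R) a b x :
 locally x (fun y => forall t, is_derive (fun z => f z t) y (df y t)) ->
 (forall t, continuity_2d_pt df x t) ->
 locally x (fun y => ex_RInt (f y) a b) ->
 is_derive (fun y => RInt (f y) a b) x (RInt (df x) a b).
Proof.
 intros H1 H2 H3.
 assert (HR: RInt (df x) a b = RInt (fun t => Derive (fun u => f u t) x) a b).
 { apply RInt_ext. intros t _. symmetry. apply is_derive_unique. destruct H1 as [e He]. apply He. apply ball_center. }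
 rewrite HR. apply (is_derive_RInt_param f a b x).
 - eapply filter_imp; [|exact H1]. intros y Hy t _. eexists; apply Hy.
 - intros t _. apply continuity_2d_pt_ext_loc with (f := df). 
   destruct H1 as [e He]. exists e. intros u v Hu Hv. symmetry; apply is_derive_unique, He. exact Hu.
   apply H2.
 - exact H3.
Qed.

Lemma cpt (f : R -> R) z : ex_derive f z -> continuity_pt f z.
Proof. intros H. apply (proj2 (continuity_pt_filterlim f z)). apply cont_of_der, H. Qed.

Lemma c2_sin2 x y : continuity_2d_pt (fun u v => sin v ^ 2) x y.
Proof. apply (continuity_1d_2d_pt_comp (fun z => z^2) (fun u v => sin v)).
 apply cpt; auto_derive; exact I.
 apply (continuity_1d_2d_pt_comp sin (fun u v => v)). apply cpt; auto_derive; exact I.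
 apply continuity_2d_pt_id2. Qed.

Lemma c2_w x y : continuity_2d_pt (fun u v => 1 - u * sin v ^ 2) x y.
Proof. apply continuity_2d_pt_minus. apply continuity_2d_pt_const.
 apply continuity_2d_pt_mult. apply continuity_2d_pt_id1. apply c2_sin2. Qed.

Lemma c2_r x y : x < 1 -> continuity_2d_pt (fun u v => sqrt (1 - u * sin v ^ 2)) x y.
Proof. intros Hx. apply (continuity_1d_2d_pt_comp sqrt (fun u v => 1 - u * sin v ^ 2)).
 apply cpt. auto_derive. apply wpos; lra. apply c2_w. Qed.

Definition dEf u v := - (sin v ^ 2) / (2 * sqrt (1 - u * sin v ^ 2)).
Definition dKf u v := sin v ^ 2 / (2 * ((1 - u * sin v ^ 2) * sqrt (1 - u * sin v ^ 2))).

Lemma c2_dE x y : x < 1 -> continuity_2d_pt dEf x y.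
Proof. intros Hx. unfold dEf, Rdiv. apply continuity_2d_pt_mult.
 apply continuity_2d_pt_opp, c2_sin2.
 apply continuity_2d_pt_inv. apply continuity_2d_pt_mult. apply continuity_2d_pt_const. apply c2_r; lra.
 apply Rgt_not_eq. apply Rmult_lt_0_compat. lra. apply sqrt_lt_R0, wpos; lra. Qed.

Lemma c2_dK x y : x < 1 -> continuity_2d_pt dKf x y.
Proof. intros Hx. unfold dKf, Rdiv. apply continuity_2d_pt_mult.
 apply c2_sin2.
 apply continuity_2d_pt_inv. apply continuity_2d_pt_mult. apply continuity_2d_pt_const.
 apply continuity_2d_pt_mult. apply c2_w. apply c2_r; lra.
 apply Rgt_not_eq. apply Rmult_lt_0_compat. lra. apply Rmult_lt_0_compat. apply wpos; lra. apply sqrt_lt_R0, wpos; lra. Qed.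

Lemma dE p : 0 < p < 1 -> is_derive Ef p ((Ef p - Kf p) / (2*p)).
Proof. intros Hp.
 assert (H : is_derive (fun y => RInt (fun u => sqrt (1 - y * sin u ^ 2)) 0 (PI/2)) p (RInt (dEf p) 0 (PI/2))).
 { apply (param_der (fun y u => sqrt (1 - y * sin u ^ 2)) dEf).
   - eapply filter_imp; [| apply (loc_int 0 1 p Hp)]. intros y Hy t. auto_derive. sides y t.
     unfold dEf. alg y t.
   - intros t. apply c2_dE; lra.
   - eapply filter_imp; [| apply (loc_int 0 1 p Hp)]. intros y Hy. apply exE; lra. }
 assert (HI : RInt (dEf p) 0 (PI/2) = RInt (fun u => 1/(2*p) * sqrt (1 - p * sin u ^ 2) + (-1/(2*p)) * / sqrt (1 - p * sin u ^ 2) + 0 * 0) 0 (PI/2)).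
 { apply RInt_ext. intros u _. unfold dEf. alg p u. }
 rewrite RInt_lin3 in HI; [| apply exE; lra | apply exK; lra | apply ex_RInt_const].
 replace ((Ef p - Kf p) / (2*p)) with (RInt (dEf p) 0 (PI/2)). exact H.
 rewrite HI. unfold Ef, Kf. match goal with |- ?a = ?b => change (@eq R a b) end. field. lra.
Qed.

Lemma dK p : 0 < p < 1 -> is_derive Kf p ((Ef p / (1 - p) - Kf p) / (2*p)).
Proof. intros Hp.
 assert (H : is_derive (fun y => RInt (fun u => / sqrt (1 - y * sin u ^ 2)) 0 (PI/2)) p (RInt (dKf p) 0 (PI/2))).
 { apply (param_der (fun y u => / sqrt (1 - y * sin u ^ 2)) dKf).
   - eapply filter_imp; [| apply (loc_int 0 1 p Hp)]. intros y Hy t. auto_derive. sides y t.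
     unfold dKf. alg y t.
   - intros t. apply c2_dK; lra.
   - eapply filter_imp; [| apply (loc_int 0 1 p Hp)]. intros y Hy. apply exK; lra. }
 assert (HI : RInt (dKf p) 0 (PI/2) = RInt (fun u => 1/(2*p) * / ((1 - p * sin u ^ 2) * sqrt (1 - p * sin u ^ 2)) + (-1/(2*p)) * / sqrt (1 - p * sin u ^ 2) + 0 * 0) 0 (PI/2)).
 { apply RInt_ext. intros u _. unfold dKf. alg p u. }
 rewrite RInt_lin3 in HI; [| apply exC; lra | apply exK; lra | apply ex_RInt_const].
 replace ((Ef p / (1 - p) - Kf p) / (2*p)) with (RInt (dKf p) 0 (PI/2)). exact H.
 rewrite HI.
 assert (HC := ibpC p ltac:(lra) ltac:(lra)).
 assert (HC' : Cf p = Ef p / (1 - p)) by (apply (Rmult_eq_reg_r (1 - p)); [field_simplify; lra | lra]).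
 unfold Cf, Kf, Ef in *. rewrite HC'. match goal with |- ?a = ?b => change (@eq R a b) end. field. lra.
Qed.

Definition Lg p := Ef p * Kf (1-p) + Ef (1-p) * Kf p - Kf p * Kf (1-p).

Lemma dLg p : 0 < p < 1 -> is_derive Lg p 0.
Proof. intros Hp. unfold Lg.
 assert (H1 := dE p Hp). assert (H2 := dK p Hp).
 assert (H3 := dE (1-p) ltac:(lra)). assert (H4 := dK (1-p) ltac:(lra)).
 auto_derive.
 - repeat split; eexists; eassumption.
 - replace (1 + - p) with (1 - p) by ring. change (Derive (fun x : R => Ef x)) with (Derive Ef). change (Derive (fun x : R => Kf x)) with (Derive Kf). rewrite (is_derive_unique _ _ _ H1), (is_derive_unique _ _ _ H2),
     (is_derive_unique _ _ _ H3), (is_derive_unique _ _ _ H4).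
   field. lra.
Qed.

Lemma Lg_const p : 0 < p < 1 -> Lg p = Lg (1/2).
Proof. intros Hp.
 destruct (Rlt_le_dec p (1/2)) as [Hl|Hl].
 - apply (eq_is_derive (V:=R_NormedModule) Lg p (1/2)); [|lra]. intros t Ht. apply dLg. lra.
 - destruct (Req_dec p (1/2)) as [->|Hn]; [reflexivity|].
   symmetry. apply (eq_is_derive (V:=R_NormedModule) Lg (1/2) p); [|lra]. intros t Ht. apply dLg. lra.
Qed.

Lemma RInt_sub (f g : R -> R) a b : ex_RInt f a b -> ex_RInt g a b ->
  RInt (fun u => f u - g u) a b = RInt f a b - RInt g a b.
Proof. intros H1 H2. exact (RInt_minus (V:=R_CompleteNormedModule) f g a b H1 H2). Qed.

Lemma int_cos : RInt cos 0 (PI/2) = 1.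
Proof. rewrite (ibp sin cos 0 (PI/2)). rewrite sin_PI2, sin_0. req. ring.
 intros u. auto_derive. exact I. match goal with |- ?a = ?b => change (@eq R a b) end. ring. intros u. auto_derive. exact I. Qed.

Lemma int_one : RInt (fun _ => 1) 0 (PI/2) = PI/2.
Proof. rewrite (RInt_const (V:=R_CompleteNormedModule)). simpl. unfold scal; simpl; unfold mult; simpl. ring. Qed.

Lemma bnd (f : R -> R) M : ex_RInt f 0 (PI/2) -> (forall u, 0 <= u <= PI/2 -> Rabs (f u) <= M) ->
  Rabs (RInt f 0 (PI/2)) <= PI/2 * M.
Proof. intros H1 H2. pose proof PI_RGT_0.
 replace (PI/2) with (PI/2 - 0) at 2 by ring. apply abs_RInt_le_const; auto. lra. Qed.

Lemma rfacts p u : p < 1 -> 0 < sqrt (1 - p * sin u ^ 2) /\ sqrt (1 - p * sin u ^ 2) ^ 2 = 1 - p * sin u ^ 2.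
Proof. intros Hp. assert (Hw := wpos p u Hp). split. apply sqrt_lt_R0, Hw. apply pow2_sqrt; lra. Qed.

Lemma bndKE p : 0 < p <= 1/2 -> Rabs (Ef p - Kf p) <= PI * p.
Proof. intros Hp. unfold Ef, Kf. rewrite <- RInt_sub; [| apply exE; lra | apply exK; lra].
 replace (PI * p) with (PI/2 * (2*p)) by field. apply bnd.
 apply (ex_RInt_minus (V:=R_CompleteNormedModule)); [apply exE; lra | apply exK; lra].
 intros u _. destruct (rfacts p u ltac:(lra)) as [Hr Hr2]. pose proof (sin2_bounds u).
 set (r := sqrt (1 - p * sin u ^ 2)) in *. set (S := sin u ^ 2) in *.
 assert (Hr3 : 1/2 <= r) by nra.
 rewrite Rabs_left1.
 2:{ apply Rmult_le_reg_r with r; [lra|]. field_simplify; [|lra]. nra. }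
 apply Rmult_le_reg_r with r; [lra|]. field_simplify; [|lra]. nra.
Qed.

Lemma bndKq p : 0 < p <= 1/2 -> Rabs (Kf (1-p)) <= PI/2 * / sqrt p.
Proof. intros Hp. unfold Kf. apply bnd. apply exK; lra.
 intros u _. destruct (rfacts (1-p) u ltac:(lra)) as [Hr Hr2]. pose proof (sin2_bounds u).
 rewrite Rabs_right by (left; apply Rinv_0_lt_compat; exact Hr).
 apply Rinv_le_contravar. apply sqrt_lt_R0; lra.
 apply sqrt_le_1_alt. nra.
Qed.

Lemma bndEq p : 0 < p <= 1/2 -> Rabs (Ef (1-p) - 1) <= PI/2 * sqrt p.
Proof. intros Hp.
 assert (E : Ef (1-p) - 1 = RInt (fun u => sqrt (1 - (1-p)*sin u^2) - cos u) 0 (PI/2)).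
 { rewrite RInt_sub, int_cos; [reflexivity| apply exE; lra | apply exRd; intros; auto_derive; exact I]. }
 rewrite E.
 apply bnd. apply (ex_RInt_minus (V:=R_CompleteNormedModule)); [apply exE; lra | apply exRd; intros; auto_derive; exact I].
 intros u Hu. destruct (rfacts (1-p) u ltac:(lra)) as [Hr Hr2].
 assert (Hc : 0 <= cos u) by (apply cos_ge_0; lra).
 assert (Hc2 : cos u ^ 2 = 1 - sin u ^ 2) by (pose proof (sin2_cos2 u) as HH; unfold Rsqr in HH; nra).
 pose proof (sin2_bounds u).
 set (r := sqrt (1 - (1-p) * sin u ^ 2)) in *. set (S := sin u ^ 2) in *. set (c := cos u) in *.
 assert (H0 : c <= r) by nra.
 rewrite Rabs_right by lra.
 rewrite <- (sqrt_pow2 (r - c)) by lra. apply sqrt_le_1_alt. nra.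
Qed.

Lemma bndK p : 0 < p <= 1/2 -> Rabs (Kf p - PI/2) <= PI * p.
Proof. intros Hp.
 assert (E : Kf p - PI/2 = RInt (fun u => / sqrt (1 - p*sin u^2) - 1) 0 (PI/2)).
 { rewrite RInt_sub, int_one; [reflexivity| apply exK; lra | apply ex_RInt_const]. }
 rewrite E.
 replace (PI * p) with (PI/2 * (2*p)) by field. apply bnd.
 apply (ex_RInt_minus (V:=R_CompleteNormedModule)); [apply exK; lra | apply ex_RInt_const].
 intros u _. destruct (rfacts p u ltac:(lra)) as [Hr Hr2]. pose proof (sin2_bounds u).
 set (r := sqrt (1 - p * sin u ^ 2)) in *. set (S := sin u ^ 2) in *.
 assert (Hr3 : 1/2 <= r) by nra. assert (Hr4 : r <= 1) by nra.
 rewrite Rabs_right.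
 2:{ apply Rle_ge. apply Rmult_le_reg_r with r; [lra|]. field_simplify; [|lra]. nra. }
 apply Rmult_le_reg_r with r; [lra|]. field_simplify; [|lra]. nra.
Qed.

Lemma Lg_near p : 0 < p <= 1/2 -> Rabs (Lg p - PI/2) <= 30 * sqrt p.
Proof. intros Hp.
 assert (H1 := bndKE p Hp). assert (H2 := bndKq p Hp). assert (H3 := bndEq p Hp). assert (H4 := bndK p Hp).
 assert (Hs : 0 < sqrt p) by (apply sqrt_lt_R0; lra).
 assert (Hs2 : sqrt p ^ 2 = p) by (apply pow2_sqrt; lra).
 assert (Hs1 : sqrt p <= 1) by nra.
 pose proof PI_RGT_0 as Hpi0. pose proof PI_4 as Hpi4.
 replace (Lg p - PI/2) with ((Ef p - Kf p) * Kf (1-p) + (Ef (1-p) - 1) * Kf p + (Kf p - PI/2)) by (unfold Lg; ring).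
 set (a := Ef p - Kf p) in *. set (b := Kf (1-p)) in *. set (c := Ef (1-p) - 1) in *.
 set (m := Kf p - PI/2) in *. replace (Kf p) with (m + PI/2) by (unfold m; ring).
 set (s := sqrt p) in *. rewrite <- Hs2 in H1, H4.
 assert (Hb : Rabs b * s <= PI/2).
 { apply Rmult_le_reg_r with (/ s). apply Rinv_0_lt_compat; lra.
   rewrite Rmult_assoc, Rinv_r by lra. lra. }
 assert (Hab : Rabs (a * b) <= PI * PI / 2 * s).
 { rewrite Rabs_mult. pose proof (Rabs_pos a). pose proof (Rabs_pos b). nra. }
 assert (Hcm : Rabs (c * (m + PI/2)) <= PI/2 * s * (PI * s^2 + PI/2)).
 { rewrite Rabs_mult. apply Rmult_le_compat; try apply Rabs_pos. exact H3.
   eapply Rle_trans. apply Rabs_triang. rewrite (Rabs_right (PI/2)) by lra. lra. }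
 eapply Rle_trans. apply Rabs_triang. eapply Rle_trans. apply Rplus_le_compat_r. apply Rabs_triang.
 assert (Hss : s ^ 2 <= s) by (simpl; rewrite Rmult_1_r; rewrite <- (Rmult_1_r s) at 3; apply Rmult_le_compat_l; lra).
 assert (F1 : PI * s ^ 2 <= PI * s) by (apply Rmult_le_compat_l; lra).
 assert (F2 : PI/2 * s * (PI * s^2 + PI/2) <= PI/2 * s * (PI * s + PI/2)).
 { apply Rmult_le_compat_l. nra. lra. }
 assert (F3 : PI/2 * s * (PI * s + PI/2) <= 2 * s * (4 + 2)).
 { apply Rmult_le_compat. nra. nra. nra. assert (PI * s <= 4) by nra. lra. }
 assert (F4 : PI * PI / 2 * s <= 8 * s).
 { assert (PI * PI <= 16) by nra. nra. }
 assert (F5 : PI * s <= 4 * s) by nra.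
 lra.
Qed.

Lemma Lg_half : Lg (1/2) = PI/2.
Proof.
 destruct (Req_dec (Lg (1/2)) (PI/2)) as [H|H]; [exact H|exfalso].
 set (d := Rabs (Lg (1/2) - PI/2)).
 assert (Hd : 0 < d) by (apply Rabs_pos_lt; lra).
 set (p := Rmin (1/2) ((d/60)^2)).
 assert (Hp : 0 < p <= 1/2).
 { unfold p. split. apply Rmin_pos; [lra| apply pow_lt; lra]. apply Rmin_l. }
 assert (Hsp : sqrt p <= d/60).
 { rewrite <- (sqrt_pow2 (d/60)) by lra. apply sqrt_le_1_alt. apply Rmin_r. }
 assert (HL := Lg_near p Hp). rewrite (Lg_const p ltac:(lra)) in HL. fold d in HL. lra.
Qed.

Lemma Lg_val p : 0 < p < 1 -> Lg p = PI/2.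
Proof. intros Hp. rewrite Lg_const by exact Hp. apply Lg_half. Qed.

Definition P1 x := (2*(2 - /x^2) * Ef (/x^2) - (1 - /x^2) * Kf (/x^2)) / 2.
Definition P2 x := ((2 + (1 - /x^2)) * Kf (1 - /x^2) - 2*(1 + (1 - /x^2)) * Ef (1 - /x^2)) / 2.

Lemma s_bounds x : 1 < x -> 0 < / x^2 < 1.
Proof. intros Hx. split. apply Rinv_0_lt_compat. nra.
 rewrite <- Rinv_1. apply Rinv_lt_contravar. nra. nra. Qed.

Lemma psi1_eq x : 1 < x -> psi1 x = P1 x.
Proof. intros Hx. destruct (s_bounds x Hx) as [H1 H2]. unfold psi1, P1.
 assert (HA := ibpA (/x^2) ltac:(lra) ltac:(lra)). fold (Af (/x^2)).
 apply (Rmult_eq_reg_l 3); [|lra]. lra. Qed.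

Lemma psi2_int t : 0 < t < 1 ->
  t^2 * RInt (fun v => sin v ^ 4 / sqrt (1 - t * sin v ^ 2)) 0 (PI/2) = Kf t - 2 * Ef t + Af t.
Proof. intros Ht.
 assert (HI : RInt (fun v => sin v ^ 4 / sqrt (1 - t * sin v ^ 2)) 0 (PI/2) =
   RInt (fun u => (1/t^2) * / sqrt (1 - t * sin u ^ 2) + (-2/t^2) * sqrt (1 - t * sin u ^ 2) + (1/t^2) * pow32 (1 - t * sin u ^ 2)) 0 (PI/2)).
 { apply RInt_ext. intros u _. alg t u. }
 rewrite RInt_lin3 in HI; [| apply exK; lra | apply exE; lra | apply exA; lra].
 rewrite HI. unfold Kf, Ef, Af. field. lra. Qed.

Lemma psi2_eq x : 1 < x -> psi2 x = P2 x.
Proof. intros Hx. destruct (s_bounds x Hx) as [H1 H2]. unfold psi2, P2.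
 rewrite Rmult_assoc. rewrite psi2_int by lra.
 assert (HA := ibpA (1 - /x^2) ltac:(lra) ltac:(lra)).
 apply (Rmult_eq_reg_l 3); [|lra]. lra. Qed.

Lemma omega_eq x : 1 < x -> omega x = 9 * PI / 8 * (/x - /x^3).
Proof. intros Hx. destruct (s_bounds x Hx) as [H1 H2]. unfold omega.
 assert (L1 : locally x (fun y => psi1 y = P1 y)).
 { eapply filter_imp; [| apply (loc_int 1 (x+1) x ltac:(lra))]. intros y Hy. apply psi1_eq; lra. }
 assert (L2 : locally x (fun y => psi2 y = P2 y)).
 { eapply filter_imp; [| apply (loc_int 1 (x+1) x ltac:(lra))]. intros y Hy. apply psi2_eq; lra. }
 rewrite (Derive_ext_loc _ _ _ L1), (Derive_ext_loc _ _ _ L2), psi1_eq, psi2_eq by lra.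
 assert (e1 := dE (/x^2) ltac:(lra)). assert (k1 := dK (/x^2) ltac:(lra)).
 assert (e2 := dE (1 - /x^2) ltac:(lra)). assert (k2 := dK (1 - /x^2) ltac:(lra)).
 evar (d1 : R). assert (HP1 : is_derive P1 x d1).
 { unfold P1. auto_derive. repeat split; try (eexists; eassumption); nra. unfold d1. reflexivity. }
 evar (d2 : R). assert (HP2 : is_derive P2 x d2).
 { unfold P2. auto_derive. repeat split; try (eexists; eassumption); nra. unfold d2. reflexivity. }
 rewrite (is_derive_unique _ _ _ HP1), (is_derive_unique _ _ _ HP2). unfold d1, d2.
 replace (x * (x * 1)) with (x^2) by ring. replace (1 + - / x^2) with (1 - / x^2) by ring.
 change (Derive (fun x : R => Ef x)) with (Derive Ef). change (Derive (fun x : R => Kf x)) with (Derive Kf).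
 rewrite (is_derive_unique _ _ _ e1), (is_derive_unique _ _ _ k1), (is_derive_unique _ _ _ e2), (is_derive_unique _ _ _ k2).
 assert (HL := Lg_val (/x^2) ltac:(lra)). unfold Lg in HL.
 replace PI with (2 * (Ef (/ x ^ 2) * Kf (1 - / x ^ 2) + Ef (1 - / x ^ 2) * Kf (/ x ^ 2) -
     Kf (/ x ^ 2) * Kf (1 - / x ^ 2))) by lra.
 assert (Hx0 : x <> 0) by lra.
 assert (Hx1 : 1 - / x^2 <> 0) by lra.
 unfold P1, P2. field. split; [lra | split; nra].
Qed.

Theorem mainTheorem10 (tau : R) :
  1 < tau < 2 ->
  Derive omega tau = 0 ->
  (forall x : R, 1 < x < tau -> Derive omega x <> 0) ->
  tau > 1732 / 1000.
Proof. intros Ht HD _.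
 assert (L : locally tau (fun y => omega y = 9 * PI / 8 * (/y - /y^3))).
 { eapply filter_imp; [| apply (loc_int 1 3 tau ltac:(lra))]. intros y Hy. apply omega_eq; lra. }
 assert (Hd : is_derive (fun y => 9 * PI / 8 * (/y - /y^3)) tau (9 * PI / 8 * (- / tau^2 + 3 / tau^4))).
 { auto_derive. split; [lra | split; [nra | exact I]]. req. field. lra. }
 replace (Derive omega tau) with (9 * PI / 8 * (- / tau^2 + 3 / tau^4)) in HD.
 2:{ symmetry. rewrite (Derive_ext_loc _ _ _ L). apply is_derive_unique. exact Hd. }
 pose proof PI_RGT_0.
 assert (H3 : - / tau^2 + 3 / tau^4 = 0).
 { apply (Rmult_eq_reg_l (9 * PI / 8)). rewrite Rmult_0_r. exact HD. lra. }
 assert (H4 : tau^2 = 3).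
 { assert (E: (- / tau^2 + 3 / tau^4) * tau^4 = 3 - tau^2) by (field; lra). rewrite H3 in E. lra. }
 nra.
Qed.
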